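(* There exist absolute constants $a,b>0$ such that the following holds. Let $A$ be a finite multiset of $n$ points in $\mathbb{R}^d$ and $\varepsilon,\delta\in(0,1)$. Let $k=b\log\delta^{-1}$ and, for $i=1,\dots,k$, let $\hat\mu_i$ be the average of $a\varepsilon^{-1}$ points drawn independently and uniformly at random from $A$ (all draws independent). Then, with probability at least $1-\delta$, every geometric median $m\in\arg\min_{c\in\mathbb{R}^d}\sum_{i=1}^{k}\|\hat\mu_i-c\|$ is a $(1+\varepsilon)$-approximate mean of $A$.
   Context: For a finite multiset $A\subset\mathbb{R}^d$, let $\mathrm{Opt}=\min_{x\in\mathbb{R}^d}\sum_{p\in A}\|p-x\|^2$ (Euclidean norm). A point $x$ is a $(1+\varepsilon)$-approximate mean of $A$ if $\sum_{p\in A}\|p-x\|^2\le(1+\varepsilon)\mathrm{Opt}$. Integrality of $k$ and $a\varepsilon^{-1}$ is ignored. *)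

(* Defs.v *)
From HB Require Import structures.
From mathcomp Require Import all_boot all_order all_algebra.
From mathcomp Require Import boolp reals exp Rstruct.
Set Implicit Arguments. Unset Strict Implicit. Unset Printing Implicit Defensive.
Import Order.TTheory GRing.Theory Num.Theory.
Local Open Scope ring_scope.

Notation RR := Rdefinitions.R.

Definition enorm (d : nat) (v : 'rV[RR]_d) : RR :=
  Num.sqrt (\sum_(i < d) v 0 i ^+ 2).

Definition kmeans_cost (n d : nat) (A : 'I_n -> 'rV[RR]_d) (x : 'rV[RR]_d) : RR :=
  \sum_(p < n) enorm (A p - x) ^+ 2.

Definition approx_mean (n d : nat) (A : 'I_n -> 'rV[RR]_d) (eps : RR)
    (x : 'rV[RR]_d) : Prop :=
  forall y : 'rV[RR]_d, kmeans_cost A x <= (1 + eps) * kmeans_cost A y.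

Definition is_geometric_median (k d : nat) (mu : 'I_k -> 'rV[RR]_d)
    (m : 'rV[RR]_d) : Prop :=
  forall c : 'rV[RR]_d,
    \sum_(i < k) enorm (mu i - m) <= \sum_(i < k) enorm (mu i - c).

(* Integer rounding of a positive real quantity (integrality is ignored in
   the paper; we round up). *)
Definition rceil (x : RR) : nat := `|Num.ceil x|%N.

(* Sample space: the index of the j-th point drawn for the i-th average;
   uniform measure on this finite type = independent uniform draws. *)
Definition samples (k s n : nat) := {ffun 'I_k * 'I_s -> 'I_n}.

Definition emp_mean (n d k s : nat) (A : 'I_n -> 'rV[RR]_d)
    (w : samples k s n) (i : 'I_k) : 'rV[RR]_d :=
  (s%:R)^-1 *: \sum_(j < s) A (w (i, j)).

Definition uprob (T : finType) (E : T -> Prop) : RR :=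
  (#|[set w : T | `[< E w >]]|%:R) / (#|T|%:R).

(* Main.v *)
Require Import Defs.
From HB Require Import structures.
From mathcomp Require Import all_boot all_order all_algebra.
From mathcomp Require Import boolp reals exp Rstruct.
From mathcomp Require Import sequences.
From mathcomp Require Import ring lra zify.
Set Implicit Arguments. Unset Strict Implicit. Unset Printing Implicit Defensive.
Import Order.TTheory GRing.Theory Num.Theory.
Local Open Scope ring_scope.

Definition sq (d : nat) (v : 'rV[RR]_d) : RR := \sum_(i < d) v 0 i ^+ 2.
Definition dot (d : nat) (u v : 'rV[RR]_d) : RR := \sum_(i < d) u 0 i * v 0 i.

Lemma sq_ge0 d (v : 'rV[RR]_d) : 0 <= sq v.
Proof. by apply: sumr_ge0 => i _; rewrite sqr_ge0. Qed.

Lemma enorm_ge0 d (v : 'rV[RR]_d) : 0 <= enorm v.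
Proof. exact: sqrtr_ge0. Qed.

Lemma enorm_sq d (v : 'rV[RR]_d) : enorm v ^+ 2 = sq v.
Proof. by rewrite /enorm sqr_sqrtr // sq_ge0. Qed.

Lemma sqN d (v : 'rV[RR]_d) : sq (- v) = sq v.
Proof. by apply: eq_bigr => i _; rewrite mxE sqrrN. Qed.

Lemma enormN d (v : 'rV[RR]_d) : enorm (- v) = enorm v.
Proof. by rewrite /enorm -/(sq _) -/(sq v) sqN. Qed.

Lemma sqD d (u v : 'rV[RR]_d) : sq (u + v) = sq u + 2 * dot u v + sq v.
Proof.
rewrite /sq /dot mulr_sumr -!big_split /=; apply: eq_bigr => i _.
rewrite mxE; ring.
Qed.

Lemma sqZ d a (v : 'rV[RR]_d) : sq (a *: v) = a ^+ 2 * sq v.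
Proof. rewrite /sq mulr_sumr; apply: eq_bigr => i _; rewrite mxE; ring. Qed.

Lemma lagrange d (u v : 'rV[RR]_d) :
  \sum_(i < d) \sum_(j < d) (u 0 i * v 0 j - u 0 j * v 0 i) ^+ 2
  = 2 * (sq u * sq v - dot u v ^+ 2).
Proof.
have -> : \sum_(i < d) \sum_(j < d) (u 0 i * v 0 j - u 0 j * v 0 i) ^+ 2 =
  \sum_(i < d) \sum_(j < d) (u 0 i ^+ 2 * v 0 j ^+ 2)
  + \sum_(i < d) \sum_(j < d) (u 0 j ^+ 2 * v 0 i ^+ 2)
  - 2 * \sum_(i < d) \sum_(j < d) ((u 0 i * v 0 i) * (u 0 j * v 0 j)).
  rewrite mulr_sumr -!big_split -sumrN -big_split /=; apply: eq_bigr => i _.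
  rewrite mulr_sumr -sumrN -!big_split /=; apply: eq_bigr => j _; ring.
rewrite [X in _ + X - _]exchange_big /=.
rewrite /sq /dot expr2 mulr_suml.
have E : forall (f g : 'I_d -> RR), \sum_(i < d) \sum_(j < d) f i * g j =
   (\sum_(i < d) f i) * (\sum_(j < d) g j).
  by move=> f g; rewrite mulr_suml; apply: eq_bigr => i _; rewrite mulr_sumr.
rewrite !E.
rewrite -(E (fun i => u 0 i * v 0 i) (fun j => u 0 j * v 0 j)).
set S := \sum_(i < d) _.
rewrite mulr_suml /S.
ring.
Qed.

Lemma CS d (u v : 'rV[RR]_d) : dot u v ^+ 2 <= sq u * sq v.
Proof.
have : 0 <= 2 * (sq u * sq v - dot u v ^+ 2).
  rewrite -lagrange; apply: sumr_ge0 => i _; apply: sumr_ge0 => j _.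
  exact: sqr_ge0.
lra.
Qed.

Lemma dot_le d (u v : 'rV[RR]_d) : dot u v <= enorm u * enorm v.
Proof.
apply: le_trans (ler_norm _) _.
rewrite -(ler_pXn2r (n:=2)) ?nnegrE ?normr_ge0 ?mulr_ge0 ?enorm_ge0 //.
by rewrite real_normK ?num_real // exprMn !enorm_sq CS.
Qed.

Lemma enormD d (u v : 'rV[RR]_d) : enorm (u + v) <= enorm u + enorm v.
Proof.
rewrite -(ler_pXn2r (n:=2)) ?nnegrE ?addr_ge0 ?enorm_ge0 //.
rewrite enorm_sq sqD sqrrD !enorm_sq.
have := dot_le u v; lra.
Qed.

Lemma enormB_sym d (u v : 'rV[RR]_d) : enorm (u - v) = enorm (v - u).
Proof. by rewrite -enormN opprB. Qed.

Lemma gm_bound k d (mu : 'I_k -> 'rV[RR]_d) (m c : 'rV[RR]_d) (rho : RR) :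
  is_geometric_median mu m -> 0 <= rho ->
  (4 * (\sum_(i < k) ((rho < enorm (mu i - c))%R : nat)) < k)%N ->
  enorm (m - c) <= 4 * rho.
Proof.
move=> gm rho0 hk.
set D := enorm (m - c).
have D0 : 0 <= D by apply: enorm_ge0.
set B := (\sum_(i < k) ((rho < enorm (mu i - c))%R : nat))%N.
have step : forall i, (D - 2 * rho) - 2 * D * ((rho < enorm (mu i - c))%R : nat)%:R
    <= enorm (mu i - m) - enorm (mu i - c).
  move=> i.
  have t1 : D <= enorm (mu i - c) + enorm (mu i - m).
    rewrite /D; have -> : m - c = (mu i - c) - (mu i - m).
      by rewrite opprB [RHS]addrC subrKA.
    apply: le_trans (enormD _ _) _; by rewrite enormN.
  have t2 : enorm (mu i - c) <= enorm (mu i - m) + D.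
    have -> : mu i - c = (mu i - m) + (m - c) by rewrite subrKA.
    rewrite /D; exact: enormD.
  case: ltP => h /=; lra.
have sum1 : \sum_(i < k) ((D - 2 * rho) - 2 * D * ((rho < enorm (mu i - c))%R : nat)%:R)
    <= 0.
  apply: le_trans (ler_sum _ (fun i _ => step i)) _.
  rewrite sumrB subr_le0; exact: gm.
rewrite sumrB sumr_const card_ord -mulr_sumr -natr_sum -/B in sum1.
have hk' : (4 * B + 1 <= k)%N by rewrite addn1.
have hk'' : 4 * B%:R + 1 <= k%:R :> RR.
  by rewrite -(ler_nat RR) natrD natrM in hk'.
rewrite -[_ *+ k]mulr_natr in sum1.
have kpos : 0 < k%:R :> RR by have := ler0n RR B; lra.
have p1 : 0 <= D * (k%:R - 4 * B%:R - 1) by apply: mulr_ge0 => //; lra.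
have p2 : D * k%:R <= 4 * rho * k%:R by nra.
by rewrite -(ler_pM2r kpos).
Qed.

Definition mean n d (A : 'I_n -> 'rV[RR]_d) : 'rV[RR]_d := (n%:R)^-1 *: \sum_(p < n) A p.

Lemma centered n d (A : 'I_n -> 'rV[RR]_d) : (0 < n)%N ->
  \sum_(p < n) (A p - mean A) = 0.
Proof.
move=> n0; rewrite sumrB sumr_const card_ord /mean scalerMnl.
rewrite -mulr_natr mulVf ?scale1r ?subrr //.
by rewrite pnatr_eq0 -lt0n.
Qed.

Lemma dot_suml I (r : seq I) d (X : I -> 'rV[RR]_d) v :
  \sum_(p <- r) dot (X p) v = dot (\sum_(p <- r) X p) v.
Proof.
rewrite /dot exchange_big /=; apply: eq_bigr => i _.
by rewrite summxE mulr_suml.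
Qed.

Lemma cost_decomp n d (A : 'I_n -> 'rV[RR]_d) x : (0 < n)%N ->
  kmeans_cost A x = kmeans_cost A (mean A) + n%:R * sq (mean A - x).
Proof.
move=> n0; rewrite /kmeans_cost.
have -> : \sum_(p < n) enorm (A p - x) ^+ 2 =
  \sum_(p < n) (sq (A p - mean A) + 2 * dot (A p - mean A) (mean A - x)
      + sq (mean A - x)).
  apply: eq_bigr => p _; rewrite enorm_sq -sqD; congr sq.
  by rewrite addrA subrK.
rewrite !big_split /= -mulr_sumr dot_suml centered //.
rewrite sumr_const card_ord.
have -> : dot 0 (mean A - x) = 0 by rewrite /dot big1 // => i _; rewrite mxE mul0r.
rewrite mulr0 addr0 mulr_natl; congr (_ + _); apply: eq_bigr => p _; by rewrite enorm_sq.
Qed.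

Lemma cost_min n d (A : 'I_n -> 'rV[RR]_d) x : (0 < n)%N ->
  kmeans_cost A (mean A) <= kmeans_cost A x.
Proof.
move=> n0; rewrite (cost_decomp A x n0) lerDl mulr_ge0 ?ler0n ?sq_ge0 //.
Qed.

Lemma opt_ge0 n d (A : 'I_n -> 'rV[RR]_d) : 0 <= kmeans_cost A (mean A).
Proof. by apply: sumr_ge0 => p _; rewrite sqr_ge0. Qed.

Lemma approx_of_close n d (A : 'I_n -> 'rV[RR]_d) eps m : (0 < n)%N -> 0 <= eps ->
  n%:R * enorm (m - mean A) ^+ 2 <= eps * kmeans_cost A (mean A) ->
  approx_mean A eps m.
Proof.
move=> n0 e0 h y.
rewrite enorm_sq -sqN opprB in h.
have := cost_min A y n0; have := opt_ge0 A.
rewrite (cost_decomp A m n0).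
move: (kmeans_cost A (mean A)) (kmeans_cost A y) h => O Y h O0 OY.
nra.
Qed.

Lemma sum_ffun_prod (I J : finType) (F : I -> J -> RR) :
  \sum_(f : {ffun I -> J}) \prod_i F i (f i) = \prod_i \sum_j F i j.
Proof. by rewrite bigA_distr_bigA. Qed.

Lemma sum_ffun1 (I J : finType) (j0 : I) (G : J -> RR) :
  \sum_(f : {ffun I -> J}) G (f j0) = (\sum_p G p) * #|J|%:R ^+ #|I|.-1.
Proof.
have -> : \sum_(f : {ffun I -> J}) G (f j0) =
   \sum_(f : {ffun I -> J}) \prod_i (if i == j0 then G (f i) else 1).
  apply: eq_bigr => f _; rewrite (bigD1 j0) //= eqxx big1 ?mulr1 //.
  by move=> i /negbTE ->.
rewrite (sum_ffun_prod (fun i j => if i == j0 then G j else 1)) (bigD1 j0) //= eqxx; congr (_ * _).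
rewrite (eq_bigr (fun _ => #|J|%:R)); last first.
  by move=> i /negbTE ->; rewrite sumr_const.
by rewrite prodr_const cardC1.
Qed.

Lemma sum_ffun2 (I J : finType) (j1 j2 : I) (G H : J -> RR) : j1 != j2 ->
  \sum_p G p = 0 ->
  \sum_(f : {ffun I -> J}) G (f j1) * H (f j2) = 0.
Proof.
move=> ne G0.
have -> : \sum_(f : {ffun I -> J}) G (f j1) * H (f j2) =
   \sum_(f : {ffun I -> J}) \prod_i (if i == j1 then G (f i) else
        if i == j2 then H (f i) else 1).
  apply: eq_bigr => f _; rewrite (bigD1 j1) //= eqxx (bigD1 j2) /=; last first.
    by rewrite eq_sym.
  rewrite eq_sym (negbTE ne) eqxx big1 ?mulr1 //.
  by move=> i /andP[/negbTE -> /negbTE ->].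
by rewrite (sum_ffun_prod (fun i j => if i == j1 then G j else if i == j2 then H j else 1)) (bigD1 j1) //= eqxx G0 mul0r.
Qed.

Definition rmean n d s (A : 'I_n -> 'rV[RR]_d) (r : {ffun 'I_s -> 'I_n}) : 'rV[RR]_d :=
  (s%:R)^-1 *: \sum_(j < s) A (r j).

Lemma rmean_exp n d s (A : 'I_n -> 'rV[RR]_d) : (0 < n)%N -> (0 < s)%N ->
  \sum_(r : {ffun 'I_s -> 'I_n}) sq (rmean A r - mean A)
  = n%:R ^+ s.-1 * kmeans_cost A (mean A) / s%:R.
Proof.
move=> n0 s0.
have s0' : s%:R != 0 :> RR by rewrite pnatr_eq0 -lt0n.
set X := fun p => A p - mean A.
have cX : forall c, \sum_(p < n) X p 0 c = 0.
  by move=> c; rewrite -summxE centered // mxE.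
have E1 : forall r : {ffun 'I_s -> 'I_n},
    sq (rmean A r - mean A) = s%:R^-1 ^+ 2 *
      \sum_(c < d) \sum_(j < s) \sum_(j' < s) X (r j) 0 c * X (r j') 0 c.
  move=> r.
  have -> : rmean A r - mean A = s%:R^-1 *: \sum_(j < s) X (r j).
    rewrite /X sumrB sumr_const card_ord -scaler_nat scalerBr scalerA mulVf //.
    by rewrite scale1r.
  rewrite sqZ; congr (_ * _); apply: eq_bigr => c _.
  rewrite summxE expr2 mulr_suml; apply: eq_bigr => j _.
  by rewrite mulr_sumr.
rewrite (eq_bigr _ (fun r _ => E1 r)) -mulr_sumr.
rewrite exchange_big /=.
rewrite (eq_bigr (fun c => \sum_(j < s) ((\sum_(p < n) X p 0 c ^+ 2) * n%:R ^+ s.-1))); last first.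
  move=> c _; rewrite exchange_big /=; apply: eq_bigr => j _.
  rewrite exchange_big /= (bigD1 j) //= [Y in _ + Y]big1 ?addr0.
    have -> : \sum_(f : {ffun 'I_s -> 'I_n}) X (f j) 0 c * X (f j) 0 c =
      \sum_(f : {ffun 'I_s -> 'I_n}) (fun p => X p 0 c ^+ 2) (f j).
      by apply: eq_bigr => f _; rewrite expr2.
    by rewrite (sum_ffun1 j (fun p => X p 0 c ^+ 2)) !card_ord.
  move=> j' ne; rewrite (@sum_ffun2 _ _ j j' (fun p => X p 0 c) (fun p => X p 0 c)) //.
  by rewrite eq_sym.
rewrite (eq_bigr (fun c => s%:R * n%:R ^+ s.-1 * \sum_(p < n) X p 0 c ^+ 2)); last first.
  by move=> c _; rewrite sumr_const card_ord -mulr_natl; ring.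
rewrite -mulr_sumr exchange_big /=.
have -> : \sum_(p < n) \sum_(c < d) X p 0 c ^+ 2 = kmeans_cost A (mean A).
  by rewrite /kmeans_cost; apply: eq_bigr => p _; rewrite enorm_sq.
by field.
Qed.

Definition badr n d s (A : 'I_n -> 'rV[RR]_d) (rho : RR) (r : {ffun 'I_s -> 'I_n}) : bool :=
  (rho < enorm (rmean A r - mean A))%R.

Lemma bad_count n d s (A : 'I_n -> 'rV[RR]_d) (eps : RR) : (0 < n)%N -> (0 < s)%N ->
  0 < eps -> (2 ^+ 16) <= eps * s%:R ->
  \sum_(r : {ffun 'I_s -> 'I_n})
     (badr A (Num.sqrt (eps * kmeans_cost A (mean A) / (16 * n%:R))) r : nat)%:R
  <= (n%:R : RR) ^+ s / (2 ^+ 12).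
Proof.
move=> n0 s0 e0 es.
set O := kmeans_cost A (mean A).
set rho := Num.sqrt _.
set C := \sum_r _.
have nR : 0 < n%:R :> RR by rewrite ltr0n.
have sR : 0 < s%:R :> RR by rewrite ltr0n.
have O0 : 0 <= O by apply: opt_ge0.
have C0 : 0 <= C by apply: sumr_ge0 => r _; apply: ler0n.
have Esum := rmean_exp A n0 s0.
have [Oz|Opos] := eqVneq O 0.
  have all0 : forall r : {ffun 'I_s -> 'I_n}, sq (rmean A r - mean A) = 0.
    move=> r; apply: (@psumr_eq0P _ _ predT (fun r => sq (rmean A r - mean A))) => //.
      by move=> i _; apply: sq_ge0.
    by rewrite Esum -/O Oz mulr0 mul0r.
  rewrite /C big1 ?divr_ge0 ?exprn_ge0 ?ltW //.
  move=> r _; rewrite /badr /rho -/O Oz mulr0 mul0r sqrtr0.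
  by rewrite /enorm -/(sq _) all0 sqrtr0 ltxx.
have Opos' : 0 < O by rewrite lt_def Opos O0.
rewrite -/O in Esum; clearbody O.
have per : forall r : {ffun 'I_s -> 'I_n},
    eps * O * (badr A rho r : nat)%:R <= 16 * n%:R * sq (rmean A r - mean A).
  move=> r; rewrite /badr; case: (boolP (rho < enorm (rmean A r - mean A))) => h /=; last first.
    by rewrite mulr0 mulr_ge0 ?sq_ge0 // mulr_ge0 // ltW.
  have rho0 : 0 <= rho by apply: sqrtr_ge0.
  have h2 : rho ^+ 2 < enorm (rmean A r - mean A) ^+ 2 by rewrite ltr_pXn2r ?nnegrE ?enorm_ge0.
  rewrite /rho sqr_sqrtr in h2; last first.
    by rewrite divr_ge0 ?mulr_ge0 ?ltW // mulr_gt0.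
  rewrite enorm_sq ltr_pdivrMr in h2; last by rewrite mulr_gt0.
  rewrite (_ : (true:nat)%:R = 1 :> RR) // mulr1; move: h2; rewrite [sq _ * _]mulrC; exact: ltW.
have sumper : eps * O * C <= 16 * n%:R * (n%:R ^+ s.-1 * O / s%:R).
  rewrite -Esum /C !mulr_sumr; apply: ler_sum => r _; exact: per.
have h3 : eps * s%:R * C <= 16 * n%:R * n%:R ^+ s.-1.
  rewrite -(ler_pM2r Opos').
  have -> : 16 * n%:R * n%:R ^+ s.-1 * O = 16 * n%:R * (n%:R ^+ s.-1 * O / s%:R) * s%:R.
    by field; rewrite gt_eqF.
  have -> : eps * s%:R * C * O = eps * O * C * s%:R by ring.
  by rewrite ler_pM2r.
have h4 : (2 ^+ 16) * C <= eps * s%:R * C by rewrite ler_wpM2r.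
have -> : n%:R ^+ s = n%:R * n%:R ^+ s.-1 :> RR by rewrite -exprS prednK.
lra.
Qed.

Lemma card_sum (T : finType) (P : T -> bool) :
  (#|[set w | P w]|%:R : RR) = \sum_w (P w : nat)%:R.
Proof.
rewrite -sum1_card natr_sum big_mkcond /=; apply: eq_bigr => w _.
by rewrite inE; case: (P w).
Qed.

Definition curf k s n (w : samples k s n) : {ffun 'I_k -> {ffun 'I_s -> 'I_n}} :=
  [ffun i => [ffun j => w (i, j)]].
Definition uncurf k s n (f : {ffun 'I_k -> {ffun 'I_s -> 'I_n}}) : samples k s n :=
  [ffun ij => f ij.1 ij.2].

Lemma curf_bij k s n : bijective (@curf k s n).
Proof.
exists (@uncurf k s n).
  by move=> w; apply/ffunP => -[i j]; rewrite !ffunE.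
by move=> f; apply/ffunP => i; apply/ffunP => j; rewrite !ffunE.
Qed.

Lemma emp_curf n d k s (A : 'I_n -> 'rV[RR]_d) (w : samples k s n) i :
  emp_mean A w i = rmean A (curf w i).
Proof. by rewrite /emp_mean /rmean; congr (_ *: _); apply: eq_bigr => j _; rewrite !ffunE. Qed.

Lemma tail_bound k s n (F : {ffun 'I_s -> 'I_n} -> bool) :
  \sum_r (F r : nat)%:R <= (n%:R : RR) ^+ s / 2 ^+ 12 ->
  \sum_(w : samples k s n) ((k <= 4 * \sum_i F (curf w i))%N : nat)%:R
    <= ((n%:R : RR) ^+ s) ^+ k / 4 ^+ k.
Proof.
move=> hF.
set G := fun r => ((2 : RR) ^+ 12) ^+ (F r : nat).
have step1 : forall w : samples k s n,
   (((k <= 4 * \sum_i F (curf w i))%N : nat)%:R : RR)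
     <= (\prod_i G (curf w i)) / 8 ^+ k.
  move=> w; rewrite /G prodrXr -exprM.
  have h8 : (8 : RR) = 2 ^+ 3 by rewrite !exprS expr0; lra.
  case: leqP => h /=.
    rewrite h8 -exprM ler_pdivlMr ?mul1r ?exprn_gt0 //.
    rewrite ler_eXn2l //; last by lra.
    move: h; set B := (\sum_(i < k) _)%N => h; lia.
  by rewrite divr_ge0 // exprn_ge0.
apply: le_trans (ler_sum _ (fun w _ => step1 w)) _.
rewrite -mulr_suml.
have -> : \sum_(j : samples k s n) \prod_i G (curf j i) =
    \sum_(f : {ffun 'I_k -> {ffun 'I_s -> 'I_n}}) \prod_i G (f i).
  by rewrite [RHS](reindex (@curf k s n)) //; apply: onW_bij; apply: curf_bij.
rewrite (sum_ffun_prod (fun i r => G r)) prodr_const card_ord.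
have sumG : \sum_r G r <= 2 * (n%:R : RR) ^+ s.
  have -> : \sum_r G r = \sum_(r : {ffun 'I_s -> 'I_n}) (1 + (2 ^+ 12 - 1) * (F r : nat)%:R).
    by apply: eq_bigr => r _; rewrite /G; case: (F r) => /=; rewrite ?mulr1 ?mulr0; ring.
  rewrite big_split /= -mulr_sumr sumr_const card_ffun !card_ord natrX.
  have : 0 <= (n%:R : RR) ^+ s by rewrite exprn_ge0.
  have C0 : 0 <= \sum_r ((F r : nat)%:R : RR) by apply: sumr_ge0 => r _; apply: ler0n.
  have x1 : (1 : RR) <= 2 ^+ 12 by apply: exprn_ege1; lra.
  move: hF; rewrite ler_pdivlMr ?exprn_gt0 //.
  move: C0 (\sum_r _) ((n%:R : RR) ^+ s) ((2 : RR) ^+ 12) x1 => C0 C N x x1.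
  move=> h1 h2; nra.
have G0 : 0 <= \sum_r G r by apply: sumr_ge0 => r _; rewrite exprn_ge0 // exprn_ge0.
have hk := lerXn2r k (G0 : _ \is Num.nneg) (_ : _ \is Num.nneg) sumG.
have {hk} hk := hk (mulr_ge0 (ler0n _ 2) (exprn_ge0 s (ler0n _ n))).
rewrite exprMn in hk.
have e8 : (8 : RR) ^+ k = 2 ^+ k * 4 ^+ k.
  by rewrite -exprMn; congr (_ ^+ _); lra.
rewrite e8 invfM mulrA ler_wpM2r ?invr_ge0 ?exprn_ge0 //.
by rewrite ler_pdivrMr ?exprn_gt0 // [_ * 2 ^+ k]mulrC.
Qed.

Lemma rceil_ge x : 0 <= x -> x <= (rceil x)%:R.
Proof.
move=> x0; rewrite /rceil natr_absz ger0_norm ?ceil_ge // ceil_ge0; lra.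
Qed.

Lemma expR1_le4 : expR (1 : RR) <= 4.
Proof.
have h : expR (1/2 : RR) * expR (-(1/2)) = 1 by rewrite -exp.expRD subrr exp.expR0.
have h2 : 1/2 <= expR (-(1/2) : RR) by have := expR_ge1Dx (-(1/2) : RR); lra.
have p := expR_gt0 (1/2 : RR).
have h3 : expR (1/2 : RR) <= 2 by nra.
have -> : (1 : RR) = 2%:R * (1/2) by lra.
rewrite expRM_natl; nra.
Qed.

Lemma delta_bound (delta : RR) (k : nat) : 0 < delta -> delta < 1 ->
  ln (delta^-1) <= k%:R -> (4 ^+ k)^-1 <= delta.
Proof.
move=> d0 d1 hk.
have e1 : delta^-1 <= expR (k%:R) :> RR.
  rewrite -[X in X <= _]lnK ?ler_expR // posrE invr_gt0 //.
have e2 : expR (k%:R) <= 4 ^+ k :> RR.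
  rewrite -[k%:R]mulr1 expRM_natl; apply: lerXn2r => //; rewrite ?nnegrE ?expR_ge0 //.
    exact expR1_le4.
have p4 : 0 < (4 : RR) ^+ k by rewrite exprn_gt0 //; lra.
rewrite -[delta]invrK lef_pV2 ?posrE ?invr_gt0 //.
exact: le_trans e1 e2.
Qed.

Lemma main_lemma n d (A : 'I_n -> 'rV[RR]_d) (eps delta : RR) (k s : nat) :
  (0 < n)%N -> 0 < eps -> 0 < delta -> delta < 1 -> (0 < s)%N ->
  2 ^+ 16 <= eps * s%:R -> ln (delta^-1) <= k%:R ->
  1 - delta <= uprob (fun w : samples k s n =>
             forall m : 'rV[RR]_d,
               is_geometric_median (emp_mean A w) m -> approx_mean A eps m).
Proof.
move=> n0 e0 d0 d1 s0 es kge.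
set O := kmeans_cost A (mean A).
set rho := Num.sqrt (eps * O / (16 * n%:R)).
have hF := bad_count A n0 s0 e0 es.
have ht := tail_bound k hF.
rewrite -/O -/rho in ht.
set E := fun w : samples k s n => forall m : 'rV[RR]_d,
               is_geometric_median (emp_mean A w) m -> approx_mean A eps m.
have O0 : 0 <= O by apply: opt_ge0.
have nR : 0 < n%:R :> RR by rewrite ltr0n.
have rho0 : 0 <= rho by apply: sqrtr_ge0.
have rho2 : rho ^+ 2 = eps * O / (16 * n%:R).
  apply: sqr_sqrtr; apply: divr_ge0; [apply: mulr_ge0 => //; exact: ltW | apply: mulr_ge0; lra].
have sub : [set w : samples k s n | (4 * \sum_i badr A rho (curf w i) < k)%N]
    \subset [set w : samples k s n | `[< E w >]].
  apply/subsetP => w; rewrite !inE => h; apply/asboolP => m gm.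
  have hb : (4 * \sum_(i < k) ((rho < enorm (emp_mean A w i - mean A))%R : nat) < k)%N.
    by under eq_bigr => i _ do rewrite emp_curf.
  have hD := gm_bound gm rho0 hb.
  apply: (approx_of_close n0 (ltW e0)).
  have hD2 : enorm (m - mean A) ^+ 2 <= (4 * rho) ^+ 2.
    by rewrite lerXn2r // nnegrE ?enorm_ge0 // mulr_ge0.
  rewrite exprMn rho2 in hD2.
  have -> : eps * O = n%:R * ((4 ^+ 2) * (eps * O / (16 * n%:R))).
    by field; rewrite gt_eqF.
  by rewrite ler_pM2l.
rewrite /uprob -/E.
have cardT : (#|samples k s n|%:R : RR) = ((n%:R : RR) ^+ s) ^+ k.
  by rewrite /samples card_ffun card_prod !card_ord natrX -exprM mulnC.
have T0 : 0 < ((n%:R : RR) ^+ s) ^+ k by rewrite !exprn_gt0.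
have lb := subset_leq_card sub.
rewrite -(ler_nat RR) card_sum in lb.
have eqc : \sum_(w : samples k s n) (((4 * \sum_i badr A rho (curf w i) < k)%N : nat)%:R : RR)
   = #|samples k s n|%:R
     - \sum_(w : samples k s n) ((k <= 4 * \sum_i badr A rho (curf w i))%N : nat)%:R.
  rewrite -sumr_const -sumrB; apply: eq_bigr => w _.
  by rewrite ltnNge; case: leqP => /=; rewrite ?subr0 ?subrr.
rewrite eqc cardT in lb; rewrite cardT.
have db := delta_bound d0 d1 kge.
move: lb ht db; set N := ((n%:R : RR) ^+ s) ^+ k; set X := \sum_w _; set e := _%:R.
move=> lb ht db.
rewrite ler_pdivlMr //.
have h := ler_wpM2l (ltW T0) db.
rewrite -/N in h.
lra.
Qed.

Theorem corollary3p6 :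
  exists a b : RR, 0 < a /\ 0 < b /\
  forall (n d : nat) (A : 'I_n -> 'rV[RR]_d) (eps delta : RR),
    (0 < n)%N -> 0 < eps < 1 -> 0 < delta < 1 ->
    let k := rceil (b * ln (delta^-1)) in
    let s := rceil (a / eps) in
    uprob (fun w : samples k s n =>
             forall m : 'rV[RR]_d,
               is_geometric_median (emp_mean A w) m -> approx_mean A eps m)
      >= 1 - delta.
Proof.
have a0 : (0 : RR) < 2 ^+ 16 by rewrite exprn_gt0 //; lra.
exists (2 ^+ 16), 1; split => //; split; first lra.
move=> n d A eps delta n0 /andP[e0 e1] /andP[d0 d1].
have sge : 2 ^+ 16 / eps <= (rceil (2 ^+ 16 / eps))%:R.
  by apply: rceil_ge; rewrite divr_ge0 // ltW.
have s0 : (0 < rceil (2 ^+ 16 / eps))%N.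
  have : 0 < (rceil (2 ^+ 16 / eps))%:R :> RR.
    by apply: lt_le_trans sge; rewrite divr_gt0.
  by rewrite ltr0n.
have es : 2 ^+ 16 <= eps * (rceil (2 ^+ 16 / eps))%:R.
  by rewrite mulrC -ler_pdivrMr.
have lnge : 0 <= ln (delta^-1) by apply: ln_ge0; rewrite invf_ge1 // ltW.
have kge : ln (delta^-1) <= (rceil (1 * ln (delta^-1)))%:R.
  have h : 1 * ln (delta^-1) <= (rceil (1 * ln (delta^-1)))%:R.
    by apply: rceil_ge; rewrite mul1r.
  by apply: le_trans h; rewrite mul1r.
exact: (main_lemma A n0 e0 d0 d1 s0 es kge).
Qed.
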